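(* Let $\beta\in\mathbb{F}_{p^m}\setminus\{0\}$ and $\mathcal{R}_{\alpha,\beta}=R[x]/\langle x^{4p^s}-(\alpha+\beta u)\rangle$. Then: (a) $\mathcal{R}_{\alpha,\beta}$ has exactly two maximal ideals, namely $\langle x^2+\gamma x+\frac{\gamma^2}{2}\rangle$ and $\langle x^2-\gamma x+\frac{\gamma^2}{2}\rangle$; (b) the set of nilpotent elements of $\mathcal{R}_{\alpha,\beta}$ is the ideal $\langle x^4-\alpha_0\rangle$; (c) the set of non-units of $\mathcal{R}_{\alpha,\beta}$ is $\langle x^2+\gamma x+\frac{\gamma^2}{2}\rangle\cup\langle x^2-\gamma x+\frac{\gamma^2}{2}\rangle$.
   Context: Let $p$ be an odd prime and $m,s$ positive integers with $p^m\equiv 3\pmod 4$; $\mathbb{F}_{p^m}$ is the field with $p^m$ elements and $R=\mathbb{F}_{p^m}[u]/\langle u^2\rangle$. Fix $\alpha\in\mathbb{F}_{p^m}\setminus\{0\}$ that is not a square in $\mathbb{F}_{p^m}$, let $\alpha_0\in\mathbb{F}_{p^m}$ satisfy $\alpha_0^{p^s}=\alpha$, and let $\gamma\in\mathbb{F}_{p^m}$ satisfy $\gamma^4+4\alpha_0=0$. *)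

(* Defs.v *)
From HB Require Import structures.
From mathcomp Require Import all_boot all_order all_algebra all_field.
Set Implicit Arguments. Unset Strict Implicit. Unset Printing Implicit Defensive.
Import GRing.Theory.
Local Open Scope ring_scope.

Section IdealNotions.
Variable T : comNzRingType.

Definition is_ideal (I : T -> Prop) : Prop :=
  [/\ I 0, (forall a b, I a -> I b -> I (a + b)) & (forall r a, I a -> I (r * a))].

Definition pideal (a : T) : T -> Prop := fun z => exists r : T, z = r * a.

Definition maximal_ideal (M : T -> Prop) : Prop :=
  [/\ is_ideal M, (exists z, ~ M z) &
      (forall J : T -> Prop, is_ideal J -> (forall z, M z -> J z) ->
          (forall z, J z) \/ (forall z, J z <-> M z))].

Definition nilpotent_elt (z : T) : Prop := exists n : nat, z ^+ n = 0.

Definition unit_elt (z : T) : Prop := exists w : T, z * w = 1.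

End IdealNotions.

(* R = F[u]/<u^2>, realised as the quotient of {poly F} by 'X^2 (u := class of 'X) *)
Definition Rdual (F : finFieldType) := {poly %/ ('X^2 : {poly F})}.

Definition Rc (F : finFieldType) (c : F) : Rdual F := qpolyC ('X^2 : {poly F}) c.

Definition Ru (F : finFieldType) : Rdual F := in_qpoly ('X^2 : {poly F}) 'X.

Definition modpoly (F : finFieldType) (p s : nat) (alpha beta : F) : {poly Rdual F} :=
  'X^(4 * p ^ s) - (Rc alpha + Rc beta * Ru F)%:P.

Definition Rab (F : finFieldType) (p s : nat) (alpha beta : F) :=
  {poly %/ modpoly p s alpha beta}.

Definition liftF (F : finFieldType) (p s : nat) (alpha beta : F) (q : {poly F})
  : Rab p s alpha beta :=
  in_qpoly (modpoly p s alpha beta) (map_poly (@Rc F) q).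

(* Main.v *)
Require Import Defs.
From HB Require Import structures.
From mathcomp Require Import all_boot all_order all_algebra all_field.
From Stdlib Require Import Classical.
From mathcomp Require Import zify ring.
Import GRing.Theory.
Local Open Scope ring_scope.

Set Implicit Arguments. Unset Strict Implicit.


Section Abs.
Variable T : comNzRingType.

Lemma pideal_ideal (a : T) : is_ideal (pideal a).
Proof.
split; first by exists 0; rewrite mul0r.
- by move=> x y [r ->] [t ->]; exists (r + t); rewrite mulrDl.
- by move=> r x [t ->]; exists (r * t); rewrite mulrA.
Qed.

Lemma unit_nil (a : T) k : a ^+ k = 0 -> unit_elt (1 + a).
Proof.
move=> hk; exists (\sum_(i < k) (- a) ^+ i).
have h := subrX1 (- a) k.
rewrite exprNn hk mulr0 sub0r in h.
by rewrite -[LHS]opprK -mulNr opprD addrC -h opprK.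
Qed.

Lemma nil_sum (a b : T) i j : a ^+ i = 0 -> b ^+ j = 0 -> (a + b) ^+ (i + j) = 0.
Proof.
move=> ha hb; rewrite exprDn big1 // => [[k hk]] _ /=.
have [hkj|hkj] := leqP j k.
  by rewrite -(subnKC hkj) exprD hb mul0r mulr0 mul0rn.
have hi : (i <= i + j - k)%N by lia.
by rewrite -(subnKC hi) exprD ha !mul0r mul0rn.
Qed.

Variables Q1 Q2 : T.
Hypothesis A1 : exists k, (Q1 * Q2) ^+ k = 0.
Hypothesis A21 : forall z, pideal Q1 z \/ exists w r, z * w = 1 + r * Q1.
Hypothesis A22 : forall z, pideal Q2 z \/ exists w r, z * w = 1 + r * Q2.
Hypothesis A31 : ~ pideal Q1 1.
Hypothesis A32 : ~ pideal Q2 1.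
Hypothesis A33 : ~ pideal Q2 Q1.
Hypothesis A4 : exists a b, a * Q1 + b * Q2 = 1.

Lemma pid_nunit (Q z : T) : ~ pideal Q 1 -> pideal Q z -> ~ unit_elt z.
Proof. by move=> hQ [r ->] [w hw]; apply: hQ; exists (w * r); rewrite -hw; ring. Qed.

Lemma pid_mem (Q r : T) : pideal Q (r * Q).
Proof. by exists r. Qed.

Lemma nil_pid_Q (Q z : T) : ~ pideal Q 1 ->
  (pideal Q z \/ exists w r, z * w = 1 + r * Q) -> nilpotent_elt z -> pideal Q z.
Proof.
move=> hQ [//|[w [r hw]]] [k hk].
have hy : (- (z * w)) ^+ k = 0 by rewrite exprNn exprMn hk !mul0r mulr0.
have [v hv] := unit_nil hy.
exfalso; apply: hQ; exists (- (v * r)).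
by rewrite -hv hw; ring.
Qed.

Lemma nil_pideal z : nilpotent_elt z <-> pideal (Q1 * Q2) z.
Proof.
split => [hz|[r ->]].
  have [c hc] := nil_pid_Q A31 (A21 z) hz.
  have [d hd] := nil_pid_Q A32 (A22 z) hz.
  have [a [b hab]] := A4.
  exists (d * a + c * b).
  by rewrite -[z]mulr1 -hab mulrDr {1}hd hc; ring.
have [k hk] := A1; exists k; by rewrite exprMn hk mulr0.
Qed.

Lemma nonunit z : ~ unit_elt z <-> pideal Q1 z \/ pideal Q2 z.
Proof.
split => [hz|[h|h]]; last first.
- exact: pid_nunit A32 h.
- exact: pid_nunit A31 h.
case: (A21 z) => [h1|[w1 [r1 h1]]]; first by left.
case: (A22 z) => [h2|[w2 [r2 h2]]]; first by right.
exfalso; have [a [b hab]] := A4.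
have [k hk] := A1.
have hn : ((r1 * b + r2 * a) * (Q1 * Q2)) ^+ k = 0 by rewrite exprMn hk mulr0.
have [v hv] := unit_nil hn.
apply: hz; exists ((w1 * (b * Q2) + w2 * (a * Q1)) * v).
rewrite -hv mulrA; congr (_ * _).
have -> : z * (w1 * (b * Q2) + w2 * (a * Q1)) = (z * w1) * (b * Q2) + (z * w2) * (a * Q1) by ring.
rewrite h1 h2 -[in RHS]hab; ring.
Qed.

Lemma maxI (Q : T) : ~ pideal Q 1 -> (forall z, pideal Q z \/ exists w r, z * w = 1 + r * Q) ->
  maximal_ideal (pideal Q).
Proof.
move=> hQ hA; split; [exact: pideal_ideal | by exists 1|].
move=> J [J0 JD JM] hJ.
case: (classic (forall z, J z -> pideal Q z)) => hc.
  by right => z; split; [apply: hc| apply: hJ].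
left; have [z hz] := not_all_ex_not _ _ hc; have [Jz nz] := imply_to_and _ _ hz.
have [//|[w [r hw]]] := hA z.
have J1 : J 1.
  have -> : 1 = w * z + (- r) * Q by rewrite mulrC hw; ring.
  by apply: JD; [apply: JM | apply: hJ; exists (- r)].
by move=> y; rewrite -[y]mulr1; apply: JM.
Qed.

Lemma max_ext (M N : T -> Prop) : (forall z, M z <-> N z) -> maximal_ideal N -> maximal_ideal M.
Proof.
move=> e [[N0 ND NM] [z nz] hN]; split.
- split; first by apply/e.
  + by move=> a b /e ha /e hb; apply/e; apply: ND.
  + by move=> r a /e ha; apply/e; apply: NM.
- by exists z; move/e.
- move=> J hJ hMJ.
  have hNJ : forall y, N y -> J y by move=> y /e; apply: hMJ.
  case: (hN J hJ hNJ) => [h|h]; first by left.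
  by right=> y; rewrite h e.
Qed.

Lemma maxM (M : T -> Prop) : maximal_ideal M ->
  (forall z, M z <-> pideal Q1 z) \/ (forall z, M z <-> pideal Q2 z).
Proof.
move=> hMax; have [[M0 MD MM] [z0 nz0] hM] := hMax.
have Mall : M 1 -> False by move=> h1; apply: nz0; rewrite -[z0]mulr1; apply: MM.
have jid : forall a : T, is_ideal (fun z => exists m r, M m /\ z = m + r * a).
  move=> a; split.
  - by exists 0, 0; rewrite mul0r addr0.
  - move=> x y [m [r [hm ->]]] [m' [r' [hm' ->]]]; exists (m + m'), (r + r'); split.
      exact: MD.
    ring.
  - move=> t x [m [r [hm ->]]]; exists (t * m), (t * r); split; first exact: MM.
    ring.
have jsub : forall (a : T) z, M z -> exists m r, M m /\ z = m + r * a.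
  by move=> a z hz; exists z, 0; rewrite mul0r addr0.
have M12 : M (Q1 * Q2).
  case: (hM _ (jid (Q1 * Q2)) (jsub _)) => [h|h].
    have [m [r [hm e]]] := h 1.
    have [k hk] := A1.
    have hn : ((- r) * (Q1 * Q2)) ^+ k = 0 by rewrite exprMn hk mulr0.
    have [v hv] := unit_nil hn.
    exfalso; apply: Mall; rewrite -hv; have -> : 1 + - r * (Q1 * Q2) = m by rewrite e; ring.
    by rewrite mulrC; apply: MM.
  by apply/h; exists 0, 1; rewrite mul1r add0r.
have sub_max : forall Q : T, ~ pideal Q 1 -> (forall z, pideal Q z \/ exists w r, z * w = 1 + r * Q) ->
   M Q -> forall z, M z <-> pideal Q z.
  move=> Q hQ hA MQ.
  have [_ _ hI] := maxI hQ hA.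
  have hQM : forall z, pideal Q z -> M z by move=> z [r ->]; apply: MM.
  case: (hI M (And3 M0 MD MM) hQM) => [h|h]; last by [].
  by exfalso; apply: Mall; apply: h.
case: (hM _ (jid Q1) (jsub _)) => [h|h].
  right; apply: sub_max A32 A22 _.
  have [m [r [hm e]]] := h 1.
  have -> : Q2 = Q2 * m + r * (Q1 * Q2) by rewrite -[Q2 in LHS]mulr1 e; ring.
  by apply: MD; apply: MM.
left; apply: sub_max A31 A21 _.
by apply/h; exists 0, 1; rewrite mul1r add0r.
Qed.

Lemma abstract_main :
  [/\ (~ (forall z, pideal Q1 z <-> pideal Q2 z)) /\
      (forall M : T -> Prop,
         maximal_ideal M <-> ((forall z, M z <-> pideal Q1 z) \/ (forall z, M z <-> pideal Q2 z))),
      (forall z : T, nilpotent_elt z <-> pideal (Q1 * Q2) z)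
  & (forall z : T, ~ unit_elt z <-> (pideal Q1 z \/ pideal Q2 z))].
Proof.
split; [split| exact: nil_pideal | exact: nonunit].
  by move=> h; apply: A33; apply/h; exists 1; rewrite mul1r.
move=> M; split; first exact: maxM.
case=> h.
  exact: (max_ext h (maxI A31 A21)).
exact: (max_ext h (maxI A32 A22)).
Qed.

End Abs.


Definition ev0 (F : finFieldType) (r : Rdual F) : F := (r : {poly F})`_0.

Lemma mkX2 (F : finFieldType) : mk_monic ('X^2 : {poly F}) = 'X^2.
Proof. by rewrite mk_monic_Xn. Qed.

Lemma ev0_zmod (F : finFieldType) : zmod_morphism (@ev0 F).
Proof. by move=> x y; rewrite /ev0 /= coefB. Qed.

Lemma ev0_monoid (F : finFieldType) : monoid_morphism (@ev0 F).
Proof.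
split; first by rewrite /ev0 /= coefC.
have h0 : forall P : {poly F}, (Pdiv.Ring.rmodp P (mk_monic 'X^2))`_0 = P`_0.
  move=> P; rewrite mkX2.
  have mX : ('X^2 : {poly F}) \is monic by apply: monicXn.
  have := congr1 (fun q : {poly F} => q`_0) (Pdiv.RingMonic.rdivp_eq mX P).
  by rewrite coefD coefMXn /= add0r => ->.
move=> x y; rewrite /ev0 poly_of_qpolyM h0.
by rewrite coef0M.
Qed.

HB.instance Definition _ (F : finFieldType) :=
  GRing.isZmodMorphism.Build (Rdual F) F (@ev0 F) (@ev0_zmod F).
HB.instance Definition _ (F : finFieldType) :=
  GRing.isMonoidMorphism.Build (Rdual F) F (@ev0 F) (@ev0_monoid F).

HB.instance Definition _ (F : finFieldType) :=
  GRing.isZmodMorphism.Build F (Rdual F) (@Rc F) (@qpolyC_is_zmod_morphism F 'X^2).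
HB.instance Definition _ (F : finFieldType) :=
  GRing.isMonoidMorphism.Build F (Rdual F) (@Rc F) (@qpolyC_is_monoid_morphism F 'X^2).

Lemma ev0_Rc (F : finFieldType) (c : F) : ev0 (Rc c) = c.
Proof. by rewrite /ev0 /Rc qpolyCE coefC. Qed.

Lemma ev0_Ru (F : finFieldType) : ev0 (Ru F) = 0.
Proof.
rewrite /ev0 /Ru in_qpoly_small ?coefX // mkX2 size_polyX size_polyXn //.
Qed.

Lemma Ru2 (F : finFieldType) : Ru F * Ru F = 0.
Proof.
rewrite /Ru -rmorphM /= -expr2; apply/val_inj => /=.
by rewrite mkX2 Pdiv.RingMonic.rmodpp // monicXn.
Qed.

Lemma in_qpoly_val (R : comNzRingType) (h : {poly R}) (z : {poly %/ h}) :
  in_qpoly h (z : {poly R}) = z.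
Proof. by apply: val_inj; exact: in_qpoly_small (size_mk_monic z). Qed.

Lemma Rc_in (F : finFieldType) (c : F) : Rc c = in_qpoly 'X^2 c%:P.
Proof.
apply: val_inj; rewrite /Rc /= Pdiv.Ring.rmodp_small // mkX2 size_polyXn.
by rewrite (leq_ltn_trans (size_polyC_leq1 c)).
Qed.

Lemma Rdual_dec (F : finFieldType) (r : Rdual F) :
  r = Rc ((r : {poly F})`_0) + Rc ((r : {poly F})`_1) * Ru F.
Proof.
have hs : (size (r : {poly F}) <= 2)%N.
  have h3 := size_mk_monic r.
  have e3 : size (mk_monic ('X^2 : {poly F})) = 3%N by rewrite mkX2 size_polyXn.
  by rewrite -ltnS (leq_trans h3) // e3.
have e : (r : {poly F}) = ((r : {poly F})`_0)%:P + ((r : {poly F})`_1)%:P * 'X.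
  apply/polyP => i; rewrite coefD coefC coefMX coefC.
  case: i => [|[|i]] /=; [by rewrite addr0 | by rewrite add0r|].
  by rewrite addr0 nth_default // (leq_trans hs).
by rewrite -[LHS]in_qpoly_val {1}e rmorphD rmorphM /= -!Rc_in.
Qed.

Section Conc.
Variables (F : finFieldType) (p s : nat) (alpha beta : F).
Hypothesis hp0 : (0 < p)%N.

Local Notation M := (modpoly p s alpha beta).
Local Notation A := (Rab p s alpha beta).
Local Notation lift := (liftF p s alpha beta).
Local Notation N := (4 * p ^ s)%N.

Lemma N_gt0 : (0 < N)%N.
Proof. by rewrite muln_gt0 expn_gt0 hp0. Qed.

Lemma monicM : M \is monic.
Proof. exact: monicXnsubC N_gt0. Qed.

Lemma mkM : mk_monic M = M.
Proof. by rewrite /mk_monic monicM size_XnsubC ?N_gt0 // ltnS N_gt0. Qed.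

Lemma lift_zmod : zmod_morphism lift.
Proof. by move=> x y; rewrite /liftF !rmorphB. Qed.

Lemma lift_monoid : monoid_morphism lift.
Proof. by split; [rewrite /liftF rmorph1 rmorph1 | move=> x y; rewrite /liftF !rmorphM]. Qed.

Definition U : A := in_qpoly M (Ru F)%:P.

Lemma inM0 : in_qpoly M M = 0 :> A.
Proof.
have h : forall P : {poly Rdual F}, P = M -> Pdiv.Ring.rmodp P (mk_monic M) = 0.
  by move=> P ->; rewrite mkM Pdiv.RingMonic.rmodpp // monicM.
by apply: val_inj; apply: h.
Qed.

Lemma U2 : U * U = 0.
Proof. by rewrite /U -rmorphM /= -polyCM Ru2 rmorph0. Qed.

End Conc.

HB.instance Definition _ (F : finFieldType) p s (alpha beta : F) :=
  GRing.isZmodMorphism.Build {poly F} (Rab p s alpha beta) (liftF p s alpha beta)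
    (@lift_zmod F p s alpha beta).
HB.instance Definition _ (F : finFieldType) p s (alpha beta : F) :=
  GRing.isMonoidMorphism.Build {poly F} (Rab p s alpha beta) (liftF p s alpha beta)
    (@lift_monoid F p s alpha beta).

Section Conc2.
Variables (F : finFieldType) (p s : nat) (alpha beta : F).
Hypothesis hp0 : (0 < p)%N.

Local Notation M := (modpoly p s alpha beta).
Local Notation A := (Rab p s alpha beta).
Local Notation lift := (liftF p s alpha beta).
Local Notation N := (4 * p ^ s)%N.
Local Notation U := (U p s alpha beta).

Lemma liftC c : lift c%:P = in_qpoly M (Rc c)%:P.
Proof. by rewrite /liftF map_polyC. Qed.

Lemma Xfrob : lift ('X^N - alpha%:P) = lift beta%:P * U.
Proof.
rewrite /liftF rmorphB /= map_polyXn !map_polyC /=.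
have e : 'X^N - (Rc alpha)%:P = M + (Rc beta)%:P * (Ru F)%:P.
  by rewrite /modpoly polyCD polyCM; ring.
by rewrite e rmorphD rmorphM /= inM0 // add0r.
Qed.

Lemma dec (z : A) : exists P0 P1, z = lift P0 + U * lift P1.
Proof.
set P0 := map_poly (@ev0 F) (z : {poly Rdual F}).
set P1 := map_poly (fun r : Rdual F => (r : {poly F})`_1) (z : {poly Rdual F}).
exists P0, P1.
have e : (z : {poly Rdual F}) = map_poly (@Rc F) P0 + (Ru F)%:P * map_poly (@Rc F) P1.
  apply/polyP => i; rewrite coefD coefCM !coef_map /= coef_map_id0 ?coef0 //.
  by rewrite [LHS]Rdual_dec mulrC.
by rewrite -[LHS]in_qpoly_val e rmorphD rmorphM.
Qed.

End Conc2.

Section Psi.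
Variables (F : finFieldType) (p s : nat) (alpha beta : F).
Hypothesis hp0 : (0 < p)%N.
Local Notation M := (modpoly p s alpha beta).
Local Notation A := (Rab p s alpha beta).
Local Notation lift := (liftF p s alpha beta).
Local Notation N := (4 * p ^ s)%N.
Variable q : {poly F}.
Hypothesis qmon : q \is monic.
Hypothesis qsize : (1 < size q)%N.
Hypothesis hq : in_qpoly q ('X^N - alpha%:P) = 0.

Lemma mkq : mk_monic q = q.
Proof. by rewrite /mk_monic qmon qsize. Qed.

Lemma inqq : in_qpoly q q = 0.
Proof.
by apply: val_inj; rewrite /= mkq Pdiv.RingMonic.rmodpp.
Qed.

Definition psi (z : A) : {poly %/ q} := in_qpoly q (map_poly (@ev0 F) (z : {poly Rdual F})).

Lemma mapM : map_poly (@ev0 F) M = 'X^N - alpha%:P.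
Proof.
rewrite /modpoly rmorphB /= map_polyXn map_polyC /= rmorphD rmorphM /=.
by rewrite !ev0_Rc ev0_Ru mulr0 addr0.
Qed.

Lemma psi_in P : psi (in_qpoly M P) = in_qpoly q (map_poly (@ev0 F) P).
Proof.
rewrite /psi /= mkM //.
have e := Pdiv.RingMonic.rdivp_eq (@monicM F p s alpha beta hp0) P.
rewrite {2}e rmorphD rmorphM /= mapM rmorphD rmorphM /= hq mulr0 add0r.
by [].
Qed.

Lemma psiM (a b : A) : psi (a * b) = psi a * psi b.
Proof.
have -> : a * b = in_qpoly M ((a : {poly Rdual F}) * b) by [].
by rewrite psi_in rmorphM /= rmorphM.
Qed.

Lemma psi_lift P : psi (lift P) = in_qpoly q P.
Proof.
rewrite /liftF psi_in -map_poly_comp map_poly_id // => x _ /=; exact: ev0_Rc.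
Qed.

Lemma psi1 : psi 1 = 1.
Proof. by rewrite -(rmorph1 lift) psi_lift rmorph1. Qed.

Lemma not_pid1 : ~ pideal (lift q) 1.
Proof.
move=> [r hr]; have := congr1 psi hr.
by rewrite psiM psi_lift inqq mulr0 psi1 => /eqP; rewrite oner_eq0.
Qed.

Lemma not_pid_other q' : in_qpoly q q' != 0 -> ~ pideal (lift q) (lift q').
Proof.
move=> hne [r hr]; have := congr1 psi hr.
by rewrite psiM !psi_lift inqq mulr0 => /eqP; rewrite (negPf hne).
Qed.

End Psi.

Lemma dvd_or_cop (F : fieldType) (q P : {poly F}) :
  irreducible_poly q -> q %| P \/ coprimep q P.
Proof.
move=> irr; case: (irredp_XsubCP irr (dvdp_gcdl q P)) => h.
  by right; rewrite /coprimep (eqp_size h) size_poly1.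
by left; rewrite -(eqp_dvdl _ h) dvdp_gcdr.
Qed.

Section Field.
Variables (F : finFieldType) (p s : nat) (alpha beta : F).
Local Notation A := (Rab p s alpha beta).
Local Notation lift := (liftF p s alpha beta).
Local Notation U := (U p s alpha beta).
Variable q : {poly F}.
Hypothesis irr : irreducible_poly q.
Hypothesis hU : pideal (lift q) U.

Lemma fieldQ (z : A) : pideal (lift q) z \/ exists w r, z * w = 1 + r * lift q.
Proof.
have [P0 [P1 ->]] := dec z.
have [w hw] := hU.
case: (dvd_or_cop P0 irr) => [/dvdpP [t ->]|/Bezout_eq1_coprimepP [[u1 u2] /= hb]].
  left; exists (lift t + w * lift P1); rewrite hw rmorphM /=; ring.
right; exists (lift u2), (- lift u1 + w * lift P1 * lift u2).
have e : lift u2 * lift P0 = 1 - lift u1 * lift q.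
  have e2 : u2 * P0 = 1 - u1 * q by rewrite -hb; ring.
  by rewrite -!rmorphM e2 rmorphB rmorph1.
rewrite mulrDl [lift P0 * _]mulrC e hw; ring.
Qed.

End Field.

Unset Implicit Arguments. Set Strict Implicit.


Lemma quad_monic (F : fieldType) (a c : F) :
  ('X^2 + (a%:P * 'X + c%:P) : {poly F}) \is monic /\ size ('X^2 + (a%:P * 'X + c%:P))%R = 3%N.
Proof.
have hs : (size (a%:P * 'X + c%:P)%R < size ('X^2 : {poly F}))%N.
  rewrite size_MXaddC size_polyXn; case: ifP => // _.
  by rewrite !ltnS (leq_trans (size_polyC_leq1 a)).
split; first by rewrite monicE lead_coefDl // lead_coefXn.
by rewrite size_polyDl // size_polyXn.
Qed.

Lemma inq_ne0 (F : finFieldType) (q : {poly F}) (b : F) :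
  q \is monic -> size q = 3%N -> b != 0 -> in_qpoly q (q + b%:P * 'X) != 0.
Proof.
move=> qm qs hb; rewrite rmorphD /= inqq ?qs // add0r; apply/eqP => h.
have := congr1 val h; rewrite /= /mk_monic qm qs /= Pdiv.Ring.rmodp_small.
  by move/eqP; rewrite mulf_eq0 polyC_eq0 polyX_eq0 (negPf hb).
by rewrite size_mulX ?polyC_eq0 // size_polyC hb qs.
Qed.

Lemma neg1_nsq (F : finFieldType) (p m : nat) :
  #|F| = (p ^ m)%N -> (p ^ m %% 4)%N = 3%N -> (2%:R : F) != 0 ->
  forall x : F, x ^+ 2 != -1.
Proof.
move=> hc h3 h2 x; apply/eqP => hx.
have e : #|F| = (4 * (p ^ m %/ 4)).+3 by rewrite hc {1}(divn_eq (p ^ m) 4) h3; lia.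
have h4 : x ^+ 4 = 1 by rewrite (exprM x 2 2) hx; ring.
have := expf_card x; rewrite e !exprS (exprM x 4) h4 expr1n mulr1.
rewrite [x * (x * x)]mulrA -expr2 hx mulN1r => hxx.
have : x * 2%:R == 0 by rewrite mulr_natr mulr2n -{1}hxx addNr.
rewrite mulf_eq0 (negPf h2) orbF => /eqP x0.
by move: hx; rewrite x0 expr0n /= => /eqP; rewrite eq_sym oppr_eq0 oner_eq0.
Qed.

Theorem corollary3p3 (F : finFieldType) (p m s : nat)
  (hp : prime p) (hpodd : odd p) (hm : (0 < m)%N) (hs : (0 < s)%N)
  (hcard : #|F| = (p ^ m)%N) (h3 : (p ^ m %% 4)%N = 3%N)
  (alpha alpha0 gamma beta : F)
  (halpha : alpha != 0) (hnsq : ~ (exists y : F, y ^+ 2 = alpha))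
  (halpha0 : alpha0 ^+ (p ^ s) = alpha)
  (hgamma : gamma ^+ 4 + 4%:R * alpha0 = 0)
  (hbeta : beta != 0) :
  let q1 : {poly F} := 'X^2 + gamma%:P * 'X + (gamma ^+ 2 / 2%:R)%:P in
  let q2 : {poly F} := 'X^2 - gamma%:P * 'X + (gamma ^+ 2 / 2%:R)%:P in
  let q3 : {poly F} := 'X^4 - alpha0%:P in
  let I1 := pideal (liftF p s alpha beta q1) in
  let I2 := pideal (liftF p s alpha beta q2) in
  (* (a) exactly two maximal ideals, namely I1 and I2 *)
  [/\ (~ (forall z, I1 z <-> I2 z)) /\
      (forall M : Rab p s alpha beta -> Prop,
         maximal_ideal M <-> ((forall z, M z <-> I1 z) \/ (forall z, M z <-> I2 z))),
  (* (b) nilradical = <x^4 - alpha0> *)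
      (forall z : Rab p s alpha beta,
         nilpotent_elt z <-> pideal (liftF p s alpha beta q3) z)
  & (* (c) non-units = I1 U I2 *)
      (forall z : Rab p s alpha beta, ~ unit_elt z <-> (I1 z \/ I2 z))].
Proof.
move=> q1 q2 q3 I1 I2.
have hp0 : (0 < p)%N by exact: prime_gt0.
have hps : (0 < p ^ s)%N by rewrite expn_gt0 hp0.
have hpc : p \in [pchar F] := card_finPcharP hcard hp.
have two : (2%:R : F) != 0.
  apply/negP => /eqP h2.
  have h2c : 2%N \in [pchar F] by rewrite inE /= h2 eqxx.
  rewrite (pcharf_eq hpc) inE in h2c.
  by move/eqP: h2c => e; rewrite -e in hpodd.
have g0 : gamma != 0.
  apply/eqP => g; move: hgamma; rewrite g expr0n /= add0r => /eqP.
  rewrite mulf_eq0 => /orP [h4|/eqP a0].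
    have e4 : (4%:R : F) = 2%:R * 2%:R by rewrite -natrM.
    by move: h4; rewrite e4 mulf_eq0 (negPf two).
  by move: halpha; rewrite -halpha0 a0 expr0n eqn0Ngt hps /= eqxx.
have four : (4%:R : F) != 0 by rewrite -[4%N]/(2 * 2)%N natrM mulf_neq0.
have nsq := @neg1_nsq F p m hcard h3 two.
set c := gamma ^+ 2 / 2%:R.
have eq1 : q1 = 'X^2 + (gamma%:P * 'X + c%:P) by rewrite /q1 addrA.
have eq2 : q2 = 'X^2 + ((- gamma)%:P * 'X + c%:P) by rewrite /q2 polyCN mulNr addrA.
have [m1 s1] := @quad_monic F gamma c. rewrite -eq1 in m1 s1.
have [m2 s2] := @quad_monic F (- gamma) c. rewrite -eq2 in m2 s2.
have nr1 : forall x, ~~ root q1 x.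
  move=> x; apply/negP => /rootP hr0.
  have hr : x ^+ 2 + (gamma * x + c) = 0.
    by rewrite -hr0 eq1 !hornerE.
  have hy : ((2%:R * x + gamma) / gamma) ^+ 2 = 4%:R * (x ^+ 2 + (gamma * x + c)) / gamma ^+ 2 - 1.
    by rewrite /c; field; rewrite two g0.
  move: (nsq ((2%:R * x + gamma) / gamma)); rewrite hy.
  by rewrite hr mulr0 mul0r sub0r eqxx.
have nr2 : forall x, ~~ root q2 x.
  move=> x; apply/negP => /rootP hr0.
  have hr : x ^+ 2 + (- gamma * x + c) = 0.
    by rewrite -hr0 eq2 !hornerE.
  have hy : ((2%:R * x - gamma) / gamma) ^+ 2 = 4%:R * (x ^+ 2 + (- gamma * x + c)) / gamma ^+ 2 - 1.
    by rewrite /c; field; rewrite two g0.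
  move: (nsq ((2%:R * x - gamma) / gamma)); rewrite hy.
  by rewrite hr mulr0 mul0r sub0r eqxx.
have irr1 : irreducible_poly q1 by apply: cubic_irreducible; rewrite ?s1.
have irr2 : irreducible_poly q2 by apply: cubic_irreducible; rewrite ?s2.
have hq3 : q1 * q2 = q3.
  have hg4 : gamma ^+ 4 = - (4%:R * alpha0) by apply/eqP; rewrite -addr_eq0 hgamma.
  have e2 : alpha0 = - c ^+ 2.
    by rewrite /c expr_div_n -exprM hg4; field.
  have E1 : 2%:R * c%:P = gamma%:P ^+ 2 :> {poly F}.
    rewrite -polyC_natr -polyCM -rmorphXn /c; congr (_ %:P); field; by rewrite two.
  rewrite eq1 eq2 /q3 e2 !polyCN rmorphXn /=.
  apply/eqP; rewrite -subr_eq0; apply/eqP.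
  transitivity ((2%:R * c%:P - gamma%:P ^+ 2) * 'X^2 : {poly F}); first by ring.
  by rewrite E1 subrr mul0r.
have hfrob : q3 ^+ (p ^ s) = 'X^(4 * p ^ s) - alpha%:P.
  have hn : [pchar {poly F}].-nat (p ^ s)%N.
    by rewrite (eq_pnat _ (pchar_poly F)) (eq_pnat _ (pcharf_eq hpc)) pnatX pnat_id.
  rewrite /q3 (exprDn_pchar _ _ hn) -exprM exprNn -signr_odd oddX hpodd orbT expr1.
  by rewrite mulN1r -rmorphXn /= halpha0.
have hX : forall q, q = q1 \/ q = q2 -> in_qpoly q ('X^(4 * p ^ s) - alpha%:P) = 0.
  move=> q hq; rewrite -hfrob -hq3 rmorphXn rmorphM /=.
  case: hq => ->; by rewrite inqq ?s1 ?s2 // ?mul0r ?mulr0 expr0n eqn0Ngt hps.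
have e12 : q1 = q2 + (2%:R * gamma)%:P * 'X.
  by rewrite /q1 /q2 polyCM; ring.
have e21 : q2 = q1 + (- (2%:R * gamma))%:P * 'X.
  by rewrite /q1 /q2 polyCN polyCM; ring.
have nz21 : in_qpoly q2 q1 != 0.
  by rewrite e12; apply: inq_ne0 => //; rewrite mulf_neq0.
have nz12 : in_qpoly q1 q2 != 0.
  by rewrite e21; apply: inq_ne0 => //; rewrite oppr_eq0 mulf_neq0.
have eQ : liftF p s alpha beta q1 * liftF p s alpha beta q2 = liftF p s alpha beta q3 by rewrite -hq3 rmorphM.
have eF : liftF p s alpha beta q3 ^+ (p ^ s) = liftF p s alpha beta beta%:P * U p s alpha beta.
  by rewrite -Xfrob // -hfrob rmorphXn.
have eB : liftF p s alpha beta (beta^-1)%:P * liftF p s alpha beta beta%:P = 1.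
  by rewrite -rmorphM -polyCM mulVf // rmorph1.
have hUe : U p s alpha beta = liftF p s alpha beta (beta^-1)%:P * (liftF p s alpha beta q1 * liftF p s alpha beta q2) ^+ (p ^ s).
  by rewrite eQ eF mulrA eB mul1r.
have ek : forall x : Rab p s alpha beta, x ^+ (p ^ s) = x ^+ (p ^ s).-1 * x.
  by move=> x; rewrite -exprSr prednK.
have hU1 : pideal (liftF p s alpha beta q1) (U p s alpha beta).
  exists (liftF p s alpha beta (beta^-1)%:P * (liftF p s alpha beta q1 * liftF p s alpha beta q2) ^+ (p ^ s).-1 * liftF p s alpha beta q2).
  by rewrite hUe ek; ring.
have hU2 : pideal (liftF p s alpha beta q2) (U p s alpha beta).
  exists (liftF p s alpha beta (beta^-1)%:P * (liftF p s alpha beta q1 * liftF p s alpha beta q2) ^+ (p ^ s).-1 * liftF p s alpha beta q1).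
  by rewrite hUe ek; ring.
have hnil : exists k, (liftF p s alpha beta q1 * liftF p s alpha beta q2) ^+ k = 0.
  exists (p ^ s * 2)%N; rewrite exprM eQ eF.
  by rewrite exprMn [U _ _ _ _ ^+ 2]expr2 U2 mulr0.
have hA4 : exists a b, a * liftF p s alpha beta q1 + b * liftF p s alpha beta q2 = 1.
  have cop : coprimep q1 q2.
    case: (dvd_or_cop q2 irr1) => // /dvdpP [t ht].
    by move: nz12; rewrite ht rmorphM /= inqq ?s1 // mulr0 eqxx.
  have [[u1 u2] /= hb] := Bezout_eq1_coprimepP _ _ cop.
  by exists (liftF p s alpha beta u1), (liftF p s alpha beta u2); rewrite -!rmorphM -rmorphD hb rmorph1.
have s1' : (1 < size q1)%N by rewrite s1.
have s2' : (1 < size q2)%N by rewrite s2.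
have H := abstract_main hnil (fieldQ irr1 hU1) (fieldQ irr2 hU2)
  (not_pid1 hp0 m1 s1' (hX q1 (or_introl erefl)))
  (not_pid1 hp0 m2 s2' (hX q2 (or_intror erefl)))
  (not_pid_other hp0 m2 s2' (hX q2 (or_intror erefl)) nz21) hA4.
rewrite -eQ; exact: H.
Qed.
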